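(* Let $G=E_u(L)=0$ be an Euler–Lagrange equation and let $P=P(x,u,u_1,\dots,u_n)$ be the characteristic of a non-variational contact symmetry, with associated contact vector field $X_P=\xi^i\partial_{x^i}+\eta\partial_u$, $\xi^i=-\partial P/\partial u_i$, $\eta=P-u_i\,\partial P/\partial u_i$, satisfying $\mathrm{pr}\,X_P(G)=fG$ for a differential function $f$; take $R_P=f-\xi^iD_i$. Then the symmetry recursion operator $S=R_P^*+P'$ is the multiplication operator $$S=f+\partial P/\partial u-D_i\big(\partial P/\partial u_i\big),$$ and this function is a variational integrating factor of $G$.
   Context: Setting: independent variables $x=(x^1,\dots,x^n)$, one dependent variable $u$, $u_i=\partial u/\partial x^i$, summation over repeated indices; $D_i$ total derivatives. Fréchet derivative $f'=\sum_J(\partial f/\partial u_J)D_J$; formal adjoint ${}^*$ of $\sum_Ja^JD_J$ is $A\mapsto\sum_J(-1)^{|J|}D_J(a^JA)$. $E_u$ is the Euler–Lagrange operator. $\mathrm{pr}$ denotes prolongation (of the contact vector field) to jet space. A symmetry $P\partial_u$ is one with $G'(P)=0$ on solutions, and it is variational if $E_u(PG)\equiv0$. A variational integrating factor of $G$ is a differential function $W\not\equiv0$ with $WG=E_u(\tilde L)$ for some $\tilde L$. *)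

(* Defs.v *)
(* Formal variational calculus on the jet space of one
   dependent variable u and n independent variables x^1..x^n, in the
   axiomatic setting of an "algebra of differential functions"
   (cf. De Sole--Kac): a commutative ring of differential functions
   equipped with commuting partial derivations d/dx^i and d/du_J, the jet
   coordinates u_J, and the property that every differential function
   depends on finitely many jet coordinates.  The ring of smooth functions
   of (x, u^{(k)}), k finite, is an instance. *)
From HB Require Import structures.
From mathcomp Require Import all_boot all_order all_algebra.
Set Implicit Arguments. Unset Strict Implicit. Unset Printing Implicit Defensive.
Import Order.TTheory GRing.Theory Num.Theory.
Local Open Scope ring_scope.

(* multi-indices J = (J_1,...,J_n); u_J = D_J u *)
Definition multi (n : nat) := {ffun 'I_n -> nat}.
Definition mord n (J : multi n) : nat := (\sum_(i < n) J i)%N.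
Definition mzero n : multi n := [ffun _ => 0%N].
Definition munit n (i : 'I_n) : multi n := [ffun j => nat_of_bool (i == j)].
Definition madd n (J K : multi n) : multi n := [ffun j => (J j + K j)%N].
Definition mbox n k (B : {ffun 'I_n -> 'I_k.+1}) : multi n :=
  [ffun i => nat_of_ord (B i)].

Record jet_algebra (n : nat) := JetAlgebra {
  ja_carrier : comNzRingType;
  ja_u : multi n -> ja_carrier;
  ja_dx : 'I_n -> ja_carrier -> ja_carrier;
  ja_du : multi n -> ja_carrier -> ja_carrier;
  ja_ord : ja_carrier -> nat;                   (* a bound on the order *)
  ja_dxD : forall i a b, ja_dx i (a + b) = ja_dx i a + ja_dx i b;
  ja_dxM : forall i a b, ja_dx i (a * b) = ja_dx i a * b + a * ja_dx i b;
  ja_duD : forall J a b, ja_du J (a + b) = ja_du J a + ja_du J b;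
  ja_duM : forall J a b, ja_du J (a * b) = ja_du J a * b + a * ja_du J b;
  ja_dx_u : forall i K, ja_dx i (ja_u K) = 0;
  ja_du_u : forall J K, ja_du J (ja_u K) = (J == K)%:R;
  ja_dxdx : forall i j a, ja_dx i (ja_dx j a) = ja_dx j (ja_dx i a);
  ja_dudu : forall J K a, ja_du J (ja_du K a) = ja_du K (ja_du J a);
  ja_dxdu : forall i J a, ja_dx i (ja_du J a) = ja_du J (ja_dx i a);
  ja_ordP : forall a J, (ja_ord a < mord J)%N -> ja_du J a = 0
}.

Arguments ja_carrier {n} j0 : rename.
Arguments ja_u {n} j0 : rename.
Arguments ja_dx {n} j0 : rename.
Arguments ja_du {n} j0 : rename.
Arguments ja_ord {n} j0 : rename.

Section Calculus.
Variables (n : nat) (V : jet_algebra n).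
Local Notation A := (ja_carrier V).
Local Notation u := (ja_u V).
Local Notation dx := (ja_dx V).
Local Notation du := (ja_du V).
Local Notation ord := (ja_ord V).

Definition totD (i : 'I_n) (a : A) : A :=
  dx i a + \sum_(B : {ffun 'I_n -> 'I_(ord a).+1})
              u (madd (mbox B) (munit i)) * du (mbox B) a.

Definition totDm (K : multi n) (a : A) : A :=
  foldr (fun i b => iter (K i) (totD i) b) a (enum 'I_n).

Definition euler (L : A) : A :=
  \sum_(B : {ffun 'I_n -> 'I_(ord L).+1})
     (-1) ^+ mord (mbox B) * totDm (mbox B) (du (mbox B) L).

Definition frechet (f a : A) : A :=
  \sum_(B : {ffun 'I_n -> 'I_(ord f).+1}) du (mbox B) f * totDm (mbox B) a.

(* total differential operator sum_{J, J_i <= k} c^J D_J and its formal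
   adjoint a |-> sum_J (-1)^|J| D_J (c^J a) *)
Definition applyop (k : nat) (c : multi n -> A) (a : A) : A :=
  \sum_(B : {ffun 'I_n -> 'I_k.+1}) c (mbox B) * totDm (mbox B) a.
Definition adjointop (k : nat) (c : multi n -> A) (a : A) : A :=
  \sum_(B : {ffun 'I_n -> 'I_k.+1})
     (-1) ^+ mord (mbox B) * totDm (mbox B) (c (mbox B) * a).

(* prolongation of X = xi^i d/dx^i + eta d/du :
   pr X = xi^i d/dx^i + sum_J phi^J d/du_J,
   phi^J = D_J(eta - xi^i u_i) + xi^i u_{J+e_i} *)
Definition prolong (xi : 'I_n -> A) (eta : A) (G : A) : A :=
  \sum_(i < n) xi i * dx i G +
  \sum_(B : {ffun 'I_n -> 'I_(ord G).+1})
     (totDm (mbox B) (eta - \sum_(i < n) xi i * u (munit i))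
      + \sum_(i < n) xi i * u (madd (mbox B) (munit i))) * du (mbox B) G.

Definition xiP (P : A) (i : 'I_n) : A := - du (munit i) P.
Definition etaP (P : A) : A :=
  P - \sum_(i < n) u (munit i) * du (munit i) P.

(* coefficients of R_P = f - xi^i D_i *)
Definition RPcoef (P f : A) (K : multi n) : A :=
  (K == mzero n)%:R * f - \sum_(i < n) (K == munit i)%:R * xiP P i.

Definition Sop (P f : A) (a : A) : A := adjointop 1 (RPcoef P f) a + frechet P a.

Definition var_int_factor (W G : A) : Prop :=
  W != 0 /\ exists Lt : A, W * G = euler Lt.

End Calculus.

(* Main.v *)
Require Import Defs.
From HB Require Import structures.
From mathcomp Require Import all_boot all_order all_algebra.
From mathcomp Require Import ring.
Import GRing.Theory.
Local Open Scope ring_scope.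

Set Implicit Arguments. Unset Strict Implicit. Unset Printing Implicit Defensive.

Section Aux.
Variables (n : nat) (V : jet_algebra n).
Local Notation A := (ja_carrier V).
Local Notation u := (ja_u V).
Local Notation dx := (ja_dx V).
Local Notation du := (ja_du V).
Local Notation ord := (ja_ord V).
Local Notation D := (totD V).
Local Notation Dm := (totDm V).

Definition msum (k : nat) (F : multi n -> A) : A :=
  \sum_(B : {ffun 'I_n -> 'I_k.+1}) F (mbox B).

Lemma addf0 (f : A -> A) : (forall x y, f (x + y) = f x + f y) -> f 0 = 0.
Proof. move=> h; have := h 0 0; rewrite addr0 => e.
by apply: (addrI (f 0)); rewrite addr0 -e.
Qed.

Lemma addfN (f : A -> A) : (forall x y, f (x + y) = f x + f y) -> forall x, f (- x) = - f x.
Proof. move=> h x; apply/eqP; rewrite -subr_eq0 opprK -h addNr.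
by rewrite (addf0 h).
Qed.

Lemma addf_sum (f : A -> A) : (forall x y, f (x + y) = f x + f y) ->
  forall (I : Type) (r : seq I) (P : pred I) (F : I -> A),
  f (\sum_(i <- r | P i) F i) = \sum_(i <- r | P i) f (F i).
Proof. move=> h I r P F; exact: (big_morph f h (addf0 h)). Qed.

Lemma dxD i a b : dx i (a + b) = dx i a + dx i b. Proof. exact: ja_dxD. Qed.
Lemma duD J a b : du J (a + b) = du J a + du J b. Proof. exact: ja_duD. Qed.
Lemma dx0 i : dx i 0 = 0. Proof. exact: (@addf0 (dx i) (dxD i)). Qed.
Lemma du0 J : du J 0 = 0. Proof. exact: (@addf0 (du J) (duD J)). Qed.
Lemma dxN i a : dx i (- a) = - dx i a. Proof. exact: (@addfN (dx i) (dxD i) a). Qed.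
Lemma duN J a : du J (- a) = - du J a. Proof. exact: (@addfN (du J) (duD J) a). Qed.
Lemma dx_sum i I r P (F : I -> A) :
  dx i (\sum_(j <- r | P j) F j) = \sum_(j <- r | P j) dx i (F j).
Proof. exact: (@addf_sum (dx i) (dxD i)). Qed.
Lemma du_sum J I r P (F : I -> A) :
  du J (\sum_(j <- r | P j) F j) = \sum_(j <- r | P j) du J (F j).
Proof. exact: (@addf_sum (du J) (duD J)). Qed.

Lemma der1 (f : A -> A) : (forall a b, f (a * b) = f a * b + a * f b) -> f 1 = 0.
Proof. move=> h; have := h 1 1; rewrite !mul1r mulr1 => e.
by apply: (addrI (f 1)); rewrite addr0 -e.
Qed.
Lemma der_m1X (f : A -> A) : (forall a b, f (a * b) = f a * b + a * f b) ->
  (forall x y, f (x + y) = f x + f y) -> forall m, f ((-1) ^+ m) = 0.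
Proof. move=> hm ha; elim=> [|m ih]; first by rewrite expr0 (der1 hm).
rewrite exprS hm ih mulr0 addr0 (addfN ha 1) (der1 hm) oppr0 mul0r //.
Qed.

Lemma dx_m1X i m : dx i ((-1) ^+ m) = 0.
Proof. exact: (@der_m1X (dx i) (@ja_dxM _ V i) (dxD i) m). Qed.
Lemma du_m1X J m : du J ((-1) ^+ m) = 0.
Proof. exact: (@der_m1X (du J) (@ja_duM _ V J) (duD J) m). Qed.

Definition van (m : nat) (a : A) := forall K, (m < mord K)%N -> du K a = 0.

Lemma van_ord a : van (ord a) a. Proof. move=> K; exact: ja_ordP. Qed.
Lemma van_le m m' a : van m a -> (m <= m')%N -> van m' a.
Proof. move=> h le K lt; apply: h; exact: leq_ltn_trans lt. Qed.
Lemma van_du m J a : van m a -> van m (du J a).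
Proof. move=> h K lt; by rewrite ja_dudu h // du0. Qed.
Lemma van_dx m i a : van m a -> van m (dx i a).
Proof. move=> h K lt; by rewrite -ja_dxdu h // dx0. Qed.
Lemma van_add m a b : van m a -> van m b -> van m (a + b).
Proof. move=> ha hb K lt; by rewrite duD ha // hb // addr0. Qed.
Lemma van_mul m a b : van m a -> van m b -> van m (a * b).
Proof. move=> ha hb K lt; by rewrite ja_duM ha // hb // mul0r mulr0 addr0. Qed.
Lemma van0 m : van m 0. Proof. by move=> K _; rewrite du0. Qed.
Lemma van_N m a : van m a -> van m (- a).
Proof. by move=> h K lt; rewrite duN h // oppr0. Qed.
Lemma van_m1X m k : van m ((-1) ^+ k).
Proof. by move=> K _; rewrite du_m1X. Qed.
Lemma van_sum m I r (P : pred I) (F : I -> A) : (forall i, P i -> van m (F i)) ->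
  van m (\sum_(i <- r | P i) F i).
Proof. move=> h K lt; rewrite du_sum big1 // => i Pi; exact: h. Qed.

Lemma mbox_inj k : injective (@mbox n k).
Proof. move=> B1 B2 /ffunP h; apply/ffunP => i; apply/val_inj.
by have := h i; rewrite !ffunE. Qed.

Lemma mord_ge (K : multi n) j : (K j <= mord K)%N.
Proof. rewrite /mord (bigD1 j) //=; exact: leq_addr. Qed.

Lemma mordD (J K : multi n) : mord (madd J K) = (mord J + mord K)%N.
Proof. by rewrite /mord -big_split /=; apply: eq_bigr => i _; rewrite ffunE. Qed.

Lemma mord_unit (i : 'I_n) : mord (munit i) = 1%N.
Proof. rewrite /mord (bigD1 i) //= big1 ?ffunE ?eqxx // => j ji.
by rewrite ffunE eq_sym (negbTE ji). Qed.

Lemma mord0 : mord (mzero n) = 0%N.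
Proof. by rewrite /mord big1 // => i _; rewrite ffunE. Qed.

Lemma mord_eq0 (K : multi n) : mord K = 0%N -> K = mzero n.
Proof. move=> h; apply/ffunP => i; rewrite ffunE; apply/eqP.
by rewrite -leqn0 -h mord_ge. Qed.

Definition msub (K : multi n) (i : 'I_n) : multi n := [ffun j => (K j - (i == j))%N].

Lemma msub_madd (K : multi n) i : msub (madd K (munit i)) i = K.
Proof. apply/ffunP => j; rewrite !ffunE addnK //. Qed.

Lemma madd_msub (K : multi n) i : (0 < K i)%N -> madd (msub K i) (munit i) = K.
Proof. move=> h; apply/ffunP => j; rewrite !ffunE.
case: eqP => [<-|_]; last by rewrite !subn0 addn0.
by rewrite subnK. Qed.

Lemma mord_msub (K : multi n) i : (0 < K i)%N -> mord (msub K i) = (mord K).-1.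
Proof. move=> h; rewrite -{2}(madd_msub h) mordD mord_unit addn1 //. Qed.

Lemma mord_msub_ge (K : multi n) i : ((K i).-1 <= mord (msub K i))%N.
Proof. have := mord_ge (msub K i) i; rewrite ffunE eqxx subn1 //. Qed.

Lemma madd_unit_eq (K : multi n) i J :
  (madd K (munit i) == J) = (0 < J i)%N && (K == msub J i).
Proof.
apply/eqP/andP => [<-|[h /eqP ->]]; last exact: madd_msub.
by rewrite ffunE ffunE eqxx addn1; split=> //; rewrite msub_madd.
Qed.

Lemma maddC (J K : multi n) : madd J K = madd K J.
Proof. by apply/ffunP => i; rewrite !ffunE addnC. Qed.
Lemma maddA (J K L : multi n) : madd J (madd K L) = madd (madd J K) L.
Proof. by apply/ffunP => i; rewrite !ffunE addnA. Qed.
Lemma madd0 (K : multi n) : madd (mzero n) K = K.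
Proof. by apply/ffunP => i; rewrite !ffunE. Qed.

End Aux.

Arguments van_ord {n V} a.
Arguments van_le {n V m} m' {a}.
Arguments van_du {n V m} J {a}.
Arguments van_dx {n V m} i {a}.
Arguments van_add {n V m a b}.
Arguments van_mul {n V m a b}.
Arguments van0 {n V} m.
Arguments van_N {n V m a}.
Arguments van_m1X {n V} m k.

Set Implicit Arguments. Unset Strict Implicit. Unset Printing Implicit Defensive.

Section Box.
Variables (n : nat) (V : jet_algebra n).
Local Notation A := (ja_carrier V).
Local Notation msum := (@msum n V).

Lemma mbox_val k (B : {ffun 'I_n -> 'I_k.+1}) j : mbox B j = B j.
Proof. by rewrite ffunE. Qed.

Lemma msum_van m k (F : multi n -> A) :
  (forall K, (m < mord K)%N -> F K = 0) -> (m <= k)%N -> msum k F = msum m F.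
Proof.
move=> hF le; rewrite /msum (bigID (fun B : {ffun 'I_n -> 'I_k.+1} => [forall j, B j <= m]%N)) /=.
rewrite [X in _ + X]big1 ?addr0; last first.
  move=> B /forallPn [j]; rewrite -ltnNge => h; apply: hF.
  by apply: leq_trans (mord_ge _ j); rewrite mbox_val.
have lemk : (m.+1 <= k.+1)%N by [].
pose h (B' : {ffun 'I_n -> 'I_m.+1}) : {ffun 'I_n -> 'I_k.+1} :=
  [ffun j => widen_ord lemk (B' j)].
pose h' (B : {ffun 'I_n -> 'I_k.+1}) : {ffun 'I_n -> 'I_m.+1} :=
  [ffun j => inord (B j)].
rewrite (reindex_onto h h'); last first.
  move=> B /forallP hB; apply/ffunP => j; apply/val_inj.
  by rewrite !ffunE /= inordK // ltnS hB.
apply: eq_big => [B'|B' _].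
  apply/andP; split.
    by apply/forallP => j; rewrite ffunE /= -ltnS.
  apply/eqP/ffunP => j; apply/val_inj; rewrite !ffunE /= inordK ?ltn_ord //.
congr F; apply/ffunP => j; by rewrite !ffunE.
Qed.

Lemma msum_van2 m k1 k2 (F : multi n -> A) :
  (forall K, (m < mord K)%N -> F K = 0) -> (m <= k1)%N -> (m <= k2)%N ->
  msum k1 F = msum k2 F.
Proof. by move=> hF h1 h2; rewrite (msum_van hF h1) (msum_van hF h2). Qed.

Lemma msum_delta k (J : multi n) (F : multi n -> A) :
  (forall j, (J j <= k)%N) -> msum k (fun K => (K == J)%:R * F K) = F J.
Proof.
move=> hJ; pose B0 : {ffun 'I_n -> 'I_k.+1} := [ffun j => inord (J j)].
have eB0 : mbox B0 = J.
  by apply/ffunP => j; rewrite !ffunE inordK // ltnS.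
rewrite /msum (bigD1 B0) //= eB0 eqxx mul1r big1 ?addr0 // => B hB.
case: eqP => [e|_]; last by rewrite mul0r.
by move: hB; rewrite -eB0 in e; rewrite (mbox_inj e) eqxx.
Qed.

Lemma msum_delta_van m k (J : multi n) (F : multi n -> A) :
  (forall K, (m < mord K)%N -> F K = 0) -> (m <= k)%N ->
  msum k (fun K => (K == J)%:R * F K) = F J.
Proof.
move=> hF le; case: (boolP [forall j, J j <= k]%N) => [/forallP|/forallPn [j hj]].
  exact: msum_delta.
rewrite -ltnNge in hj.
rewrite hF; last by apply: leq_trans (mord_ge _ j); exact: leq_ltn_trans hj.
rewrite /msum big1 // => B _; case: eqP => [e|_]; last by rewrite mul0r.
by move: hj; rewrite -e mbox_val ltnNge -ltnS ltn_ord.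
Qed.

Lemma val_inord k m : nat_of_ord (inord m : 'I_k.+1) = if (m <= k)%N then m else 0%N.
Proof.
case: ifP => h; first by rewrite inordK.
rewrite /inord /insubd; case: insubP => //= x; by rewrite ltnS h.
Qed.

Lemma msum_shift k (i : 'I_n) (F : multi n -> A) :
  (forall M : multi n, (k < M i)%N -> F M = 0) ->
  msum k (fun K => F (madd K (munit i))) =
  msum k (fun M => if (0 < M i)%N then F M else 0).
Proof.
move=> hF.
pose inc (B : {ffun 'I_n -> 'I_k.+1}) : {ffun 'I_n -> 'I_k.+1} :=
  [ffun j => if j == i then inord (B j).+1 else B j].
pose dec (B : {ffun 'I_n -> 'I_k.+1}) : {ffun 'I_n -> 'I_k.+1} :=
  [ffun j => if j == i then inord (B j).-1 else B j].
rewrite /msum [RHS](eq_bigr (fun B : {ffun 'I_n -> 'I_k.+1} => if (0 < B i)%N then F (mbox B) else 0));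
  last by move=> B _; rewrite mbox_val.
rewrite -big_mkcond /=.
rewrite [RHS](reindex_onto inc dec); last first.
  move=> B hB; apply/ffunP => j; rewrite !ffunE; case: eqP => [->|//].
  have h1 : ((B i).-1 <= k)%N by rewrite (leq_trans (leq_pred _)) // -ltnS ltn_ord.
  have h2 : (B i <= k)%N by rewrite -ltnS ltn_ord.
  by apply/val_inj; rewrite /= !val_inord h1 prednK // ?h2.
rewrite (bigID (fun B : {ffun 'I_n -> 'I_k.+1} => (B i < k)%N)) /=.
rewrite [X in _ + X]big1 ?addr0; last first.
  move=> B; rewrite -leqNgt => hB; apply: hF.
  by rewrite !ffunE eqxx addn1 ltnS.
apply: eq_big => [B|B hB].
  case: (ltnP (B i) k) => hB.
    rewrite ffunE eqxx val_inord hB /=; symmetry; apply/eqP/ffunP => j; rewrite !ffunE.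
    case: eqP => [->|//]; apply/val_inj. 
    by rewrite /= !val_inord hB /= (ltnW hB).
  rewrite ffunE eqxx val_inord ltnNge.
  have -> : ((B i).+1 <= k)%N = false by rewrite ltnNge hB.
  by [].
congr F; apply/ffunP => j; rewrite !ffunE; case: (j =P i) => [->|/eqP h].
  by rewrite eqxx val_inord hB addn1.
by rewrite eq_sym (negbTE h) addn0.
Qed.

Lemma munit_neq0 (i : 'I_n) : (munit i == mzero n) = false.
Proof. apply/eqP => /ffunP /(_ i); by rewrite !ffunE eqxx. Qed.

Lemma munit_eq (i j : 'I_n) : (munit i == munit j) = (i == j).
Proof.
apply/eqP/eqP => [/ffunP /(_ i)|->//]; rewrite !ffunE eqxx.
by case: eqP.
Qed.

Lemma mord_le1 (K : multi n) : (mord K <= 1)%N -> K = mzero n \/ exists j, K = munit j.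
Proof.
move=> h; case e: (mord K) => [|m]; first by left; exact: mord_eq0.
right; have : ~~ [forall j, K j == 0%N].
  apply/negP => /forallP hK; move: e; rewrite /mord big1 // => j _; exact/eqP.
case/forallPn => j; rewrite -lt0n => hj; exists j.
have e2 : mord (msub K j) = 0%N by rewrite mord_msub // e; move: h; rewrite e; case: m {e}.
by rewrite -(madd_msub hj) (mord_eq0 e2) maddC; apply/ffunP => l; rewrite !ffunE addn0.
Qed.

Lemma msum_first (F : multi n -> A) :
  (forall K, (1 < mord K)%N -> F K = 0) ->
  msum 1 F = F (mzero n) + \sum_(i < n) F (munit i).
Proof.
move=> hF.
have unit_le (i : 'I_n) j : (munit i j <= 1)%N by rewrite ffunE; case: (i == j).
rewrite -(@msum_delta 1 (mzero n) F); last by move=> j; rewrite ffunE.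
rewrite (eq_bigr (fun i => msum 1 (fun K => (K == munit i)%:R * F K))); last first.
  by move=> i _; rewrite msum_delta.
rewrite /msum exchange_big /= -big_split /=; apply: eq_bigr => B _.
rewrite -mulr_suml -mulrDl.
case: (leqP (mord (mbox B)) 1) => h; last by rewrite hF // !mulr0.
case: (mord_le1 h) => [->|[j ->]].
  by rewrite eqxx big1 ?addr0 ?mul1r // => i _; rewrite eq_sym munit_neq0.
rewrite munit_neq0 add0r (bigD1 j) //= eqxx big1 ?addr0 ?mul1r // => i hi.
by rewrite munit_eq eq_sym (negbTE hi).
Qed.

End Box.

Set Implicit Arguments. Unset Strict Implicit. Unset Printing Implicit Defensive.

Section TotD.
Variables (n : nat) (V : jet_algebra n).
Local Notation A := (ja_carrier V).
Local Notation u := (ja_u V).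
Local Notation dx := (ja_dx V).
Local Notation du := (ja_du V).
Local Notation ord := (ja_ord V).
Local Notation D := (@totD _ V).
Local Notation Dm := (@totDm _ V).
Local Notation msum := (@msum n V).
Local Notation van := (@van n V).

Lemma msum_min m o k (F : multi n -> A) :
  (forall K, (m < mord K)%N -> F K = 0) -> (forall K, (o < mord K)%N -> F K = 0) ->
  (m <= k)%N -> msum o F = msum k F.
Proof.
move=> h1 h2 le; apply: (@msum_van2 _ _ (minn m o)).
- by move=> K; rewrite gtn_min => /orP [/h1|/h2].
- by rewrite geq_minr.
- by rewrite (leq_trans (geq_minl _ _)).
Qed.

Lemma totD_box i m k a : van m a -> (m <= k)%N ->
  D i a = dx i a + msum k (fun K => u (madd K (munit i)) * du K a).
Proof.
move=> va le; rewrite /totD; congr (_ + _).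
apply: (@msum_min m (ord a) k (fun K => u (madd K (munit i)) * du K a)) => // K h.
  by rewrite va // mulr0.
by rewrite ja_ordP // mulr0.
Qed.

Lemma frechet_box m k a Q : van m a -> (m <= k)%N ->
  frechet a Q = msum k (fun K => du K a * Dm K Q).
Proof.
move=> va le; rewrite /frechet.
apply: (@msum_min m (ord a) k (fun K => du K a * Dm K Q)) => // K h.
  by rewrite va // mul0r.
by rewrite ja_ordP // mul0r.
Qed.

Lemma van_max_l a b : van (maxn (ord a) (ord b)) a.
Proof. apply: van_le (van_ord a) _; exact: leq_maxl. Qed.
Lemma van_max_r a b : van (maxn (ord a) (ord b)) b.
Proof. apply: van_le (van_ord b) _; exact: leq_maxr. Qed.
Arguments van_max_l : clear implicits.
Arguments van_max_r : clear implicits.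

Lemma totD_add i a b : D i (a + b) = D i a + D i b.
Proof.
set m := maxn (ord a) (ord b).
have va := van_max_l a b; have vb := van_max_r a b.
rewrite (totD_box i (van_add va vb) (leqnn m)) (totD_box i va (leqnn m)).
rewrite (totD_box i vb (leqnn m)) dxD /msum.
rewrite (eq_bigr (fun B => u (madd (mbox B) (munit i)) * du (mbox B) a +
   u (madd (mbox B) (munit i)) * du (mbox B) b)); last by move=> B _; rewrite duD mulrDr.
rewrite big_split /=; ring.
Qed.

Lemma totD0 i : D i 0 = 0. Proof. exact: (@addf0 _ _ (D i) (totD_add i)). Qed.
Lemma totDN i a : D i (- a) = - D i a. Proof. exact: (@addfN _ _ (D i) (totD_add i)). Qed.
Lemma totD_sum i I r (P : pred I) (F : I -> A) :
  D i (\sum_(j <- r | P j) F j) = \sum_(j <- r | P j) D i (F j).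
Proof. exact: (@addf_sum _ _ (D i) (totD_add i)). Qed.

Lemma totD_mul i a b : D i (a * b) = D i a * b + a * D i b.
Proof.
set m := maxn (ord a) (ord b).
have va := van_max_l a b; have vb := van_max_r a b.
rewrite (totD_box i (van_mul va vb) (leqnn m)) (totD_box i va (leqnn m)).
rewrite (totD_box i vb (leqnn m)) ja_dxM /msum.
rewrite (eq_bigr (fun B => u (madd (mbox B) (munit i)) * du (mbox B) a * b +
   a * (u (madd (mbox B) (munit i)) * du (mbox B) b))); last first.
  by move=> B _; rewrite ja_duM; ring.
rewrite big_split /= -mulr_suml -mulr_sumr; ring.
Qed.

Lemma totD_m1X i m : D i ((-1) ^+ m) = 0.
Proof.
rewrite (totD_box i (@van_m1X _ V 0 m) (leqnn 0)) dx_m1X.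
rewrite /msum big1 ?addr0 // => B _; by rewrite du_m1X mulr0.
Qed.

Lemma totD_m1X_mul i m a : D i ((-1) ^+ m * a) = (-1) ^+ m * D i a.
Proof. by rewrite totD_mul totD_m1X mul0r add0r. Qed.

Lemma Dm_morph (phi : A -> A) : (forall i x, phi (D i x) = D i (phi x)) ->
  forall K x, phi (Dm K x) = Dm K (phi x).
Proof.
move=> h K x; rewrite /totDm; elim: (enum 'I_n) => //= j s ih.
elim: (K j) => //= m ihm; by rewrite h ihm.
Qed.

Lemma Dm_add K x y : Dm K (x + y) = Dm K x + Dm K y.
Proof.
rewrite /totDm; elim: (enum 'I_n) => //= j s ih.
elim: (K j) => //= m ihm; by rewrite ihm totD_add.
Qed.

Lemma Dm0 K : Dm K 0 = 0. Proof. exact: (@addf0 _ _ (Dm K) (Dm_add K)). Qed.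
Lemma DmN K a : Dm K (- a) = - Dm K a. Proof. exact: (@addfN _ _ (Dm K) (Dm_add K)). Qed.
Lemma Dm_sum K I r (P : pred I) (F : I -> A) :
  Dm K (\sum_(j <- r | P j) F j) = \sum_(j <- r | P j) Dm K (F j).
Proof. exact: (@addf_sum _ _ (Dm K) (Dm_add K)). Qed.

Lemma Dm_m1X_mul K m a : Dm K ((-1) ^+ m * a) = (-1) ^+ m * Dm K a.
Proof. symmetry; apply: (@Dm_morph (fun x => (-1) ^+ m * x)) => i x; by rewrite totD_m1X_mul. Qed.

Lemma Dm_zero a : Dm (mzero n) a = a.
Proof.
rewrite /totDm; elim: (enum 'I_n) => //= j s ih; by rewrite ffunE.
Qed.

Lemma euler_box m k a : van m a -> (m <= k)%N ->
  euler a = msum k (fun K => (-1) ^+ mord K * Dm K (du K a)).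
Proof.
move=> va le; rewrite /euler.
apply: (@msum_min m (ord a) k (fun K => (-1) ^+ mord K * Dm K (du K a))) => // K h.
  by rewrite va // Dm0 mulr0.
by rewrite ja_ordP // Dm0 mulr0.
Qed.

Lemma du_totD J i a :
  du J (D i a) = D i (du J a) + (if (0 < J i)%N then du (msub J i) a else 0).
Proof.
have va := van_ord a.
rewrite (totD_box i va (leqnn (ord a))) (totD_box i (van_du J va) (leqnn (ord a))).
rewrite duD -ja_dxdu /msum du_sum -addrA; congr (_ + _).
rewrite (eq_bigr (fun B => (mbox B == msub J i)%:R * (0 < J i)%:R * du (mbox B) a +
    u (madd (mbox B) (munit i)) * du (mbox B) (du J a))); last first.
  move=> B _; rewrite ja_duM ja_du_u ja_dudu eq_sym madd_unit_eq.
  by case: (0 < J i)%N; case: (_ == _); rewrite /= ?mulr1 ?mulr0 ?mul0r ?mul1r.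
rewrite big_split /= addrC; congr (_ + _).
case: ifP => h; last by rewrite big1 // => B _; rewrite mulr0 mul0r.
rewrite (eq_bigr (fun B => (mbox B == msub J i)%:R * du (mbox B) a)); last first.
  by move=> B _; rewrite mulr1.
exact: (@msum_delta_van _ V (ord a) (ord a) (msub J i) (fun K => du K a) (fun K h => ja_ordP h) (leqnn _)).
Qed.

End TotD.
Arguments van_max_l {n V} a b.
Arguments van_max_r {n V} a b.

Set Implicit Arguments. Unset Strict Implicit. Unset Printing Implicit Defensive.

Section Comm.
Variables (n : nat) (V : jet_algebra n).
Local Notation A := (ja_carrier V).
Local Notation u := (ja_u V).
Local Notation dx := (ja_dx V).
Local Notation du := (ja_du V).
Local Notation ord := (ja_ord V).
Local Notation D := (@totD _ V).
Local Notation Dm := (@totDm _ V).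
Local Notation msum := (@msum n V).
Local Notation van := (@van n V).

Lemma msumD k (F G : multi n -> A) :
  msum k (fun K => F K + G K) = msum k F + msum k G.
Proof. exact: big_split. Qed.
Lemma msum_ext k (F G : multi n -> A) :
  (forall K, F K = G K) -> msum k F = msum k G.
Proof. by move=> h; apply: eq_bigr => B _; rewrite h. Qed.
Lemma msum0 k : msum k (fun _ => 0) = 0.
Proof. by rewrite /msum big1. Qed.
Lemma msum_mulr k c (F : multi n -> A) : c * msum k F = msum k (fun K => c * F K).
Proof. by rewrite /msum mulr_sumr. Qed.
Lemma msum_mull k c (F : multi n -> A) : msum k F * c = msum k (fun K => F K * c).
Proof. by rewrite /msum mulr_suml. Qed.

Lemma van_totD m i a : van m a -> van m.+1 (D i a).
Proof.
move=> va K lt; rewrite du_totD va ?totD0 ?add0r; last exact: ltnW.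
case: ifP => // h; apply: va; rewrite mord_msub //.
by rewrite -ltnS prednK // (leq_trans _ lt).
Qed.

Lemma pos_entry (K : multi n) d : mord K = d.+1 -> exists i, (0 < K i)%N.
Proof.
move=> e; have : ~~ [forall j, K j == 0%N].
  apply/negP => /forallP hK; move: e; rewrite /mord big1 // => j _; exact/eqP.
by case/forallPn => j; rewrite -lt0n => hj; exists j.
Qed.

Lemma DD_expand i j a :
  let k := (ord a).+1 in
  D i (D j a) =
  dx i (dx j a) + msum k (fun K => u (madd K (munit j)) * dx i (du K a)) +
  (msum k (fun M => u (madd M (munit i)) * dx j (du M a)) +
   msum k (fun M => u (madd M (munit i)) *
                    msum k (fun K => u (madd K (munit j)) * du K (du M a))) +
   msum k (fun K => u (madd (madd K (munit j)) (munit i)) * du K a)).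
Proof.
move=> k; have va := van_ord a; have le : (ord a <= k)%N by [].
have e1 : dx i (D j a) = dx i (dx j a) + msum k (fun K => u (madd K (munit j)) * dx i (du K a)).
  rewrite (totD_box j va le) dxD /msum dx_sum; congr (_ + _).
  by apply: eq_bigr => B _; rewrite ja_dxM ja_dx_u mul0r add0r.
have e2 : forall M, du M (D j a) = dx j (du M a) +
     msum k (fun K => u (madd K (munit j)) * du K (du M a)) +
     (if (0 < M j)%N then du (msub M j) a else 0).
  by move=> M; rewrite du_totD (totD_box j (van_du M va) le).
have e3 : msum k (fun M => u (madd M (munit i)) * (if (0 < M j)%N then du (msub M j) a else 0))
        = msum k (fun K => u (madd (madd K (munit j)) (munit i)) * du K a).
  rewrite (@msum_ext k _ (fun M => if (0 < M j)%N then
        u (madd M (munit i)) * du (msub M j) a else 0)); last first.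
    by move=> M; case: ifP; rewrite ?mulr0.
  rewrite -msum_shift.
    by apply: msum_ext => K; rewrite msub_madd.
  move=> M hM; rewrite va ?mulr0 //.
  by apply: leq_trans (mord_msub_ge M j); rewrite -ltnS prednK // (leq_trans _ hM).
have e4 : msum k (fun M => u (madd M (munit i)) * du M (D j a)) =
   msum k (fun M => u (madd M (munit i)) * dx j (du M a)) +
   msum k (fun M => u (madd M (munit i)) * msum k (fun K => u (madd K (munit j)) * du K (du M a))) +
   msum k (fun M => u (madd M (munit i)) * (if (0 < M j)%N then du (msub M j) a else 0)).
  by rewrite -!msumD; apply: msum_ext => M; rewrite e2 !mulrDr.
by rewrite (totD_box i (van_totD j va) (leqnn k)) e1 e4 e3.
Qed.

Lemma totD_comm i j a : D i (D j a) = D j (D i a).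
Proof.
rewrite !DD_expand ja_dxdx.
set k := (ord a).+1.
have e : msum k (fun M => u (madd M (munit i)) *
                    msum k (fun K => u (madd K (munit j)) * du K (du M a))) =
         msum k (fun M => u (madd M (munit j)) *
                    msum k (fun K => u (madd K (munit i)) * du K (du M a))).
  rewrite /msum; under eq_bigr do rewrite mulr_sumr.
  rewrite exchange_big /=; apply: eq_bigr => B _; rewrite mulr_sumr.
  by apply: eq_bigr => B' _; rewrite ja_dudu; ring.
have e' : msum k (fun K => u (madd (madd K (munit j)) (munit i)) * du K a) =
          msum k (fun K => u (madd (madd K (munit i)) (munit j)) * du K a).
  by apply: msum_ext => K; rewrite -!maddA (maddC (munit j)).
rewrite e e'; ring.
Qed.

Lemma iter_D_comm i j m x : iter m (D j) (D i x) = D i (iter m (D j) x).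
Proof. by elim: m => //= m ->; rewrite totD_comm. Qed.

Lemma Dm_D K i a : Dm K (D i a) = D i (Dm K a).
Proof. symmetry; apply: Dm_morph => j x; exact: totD_comm. Qed.

Lemma Dm_add_unit K i a : Dm (madd K (munit i)) a = D i (Dm K a).
Proof.
rewrite /totDm.
have : forall s : seq 'I_n, uniq s ->
  foldr (fun j b => iter (madd K (munit i) j) (D j) b) a s =
  if i \in s then D i (foldr (fun j b => iter (K j) (D j) b) a s)
  else foldr (fun j b => iter (K j) (D j) b) a s.
  elim=> [|j s ih] //= /andP [hjs hs]; rewrite in_cons ih // ffunE.
  case: (i =P j) => [eij|/eqP hij] /=.
    subst j; by rewrite (negbTE hjs) ffunE eqxx addn1.
  rewrite ffunE (negbTE hij) addn0; case: ifP => // _; exact: iter_D_comm.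
by move=> /(_ (enum 'I_n) (enum_uniq _)); rewrite mem_enum.
Qed.

Lemma Dm_unit i a : Dm (munit i) a = D i a.
Proof. by rewrite -{1}(madd0 (munit i)) Dm_add_unit Dm_zero. Qed.

Lemma van_Dm m K a : van m a -> van (m + mord K) (Dm K a).
Proof.
move=> va; have : forall d (K : multi n), mord K = d -> van (m + d) (Dm K a).
  elim=> [|d ih] K' e.
    by rewrite (mord_eq0 e) Dm_zero addn0.
  have [i hi] := pos_entry e.
  rewrite -(madd_msub hi) Dm_add_unit addnS; apply: van_totD; apply: ih.
  by rewrite mord_msub // e.
by move=> /(_ _ K erefl).
Qed.

End Comm.
Arguments van_totD {n V m} i {a}.
Arguments van_Dm {n V m} K {a}.

Set Implicit Arguments. Unset Strict Implicit. Unset Printing Implicit Defensive.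

Section Frechet.
Variables (n : nat) (V : jet_algebra n).
Local Notation A := (ja_carrier V).
Local Notation u := (ja_u V).
Local Notation dx := (ja_dx V).
Local Notation du := (ja_du V).
Local Notation ord := (ja_ord V).
Local Notation D := (@totD _ V).
Local Notation Dm := (@totDm _ V).
Local Notation msum := (@msum n V).
Local Notation van := (@van n V).
Implicit Types (a x y Q c : A) (K J M : multi n) (i : 'I_n).

Definition adjf (Q c : A) : A :=
  msum (ord Q) (fun K => (-1) ^+ mord K * Dm K (du K Q * c)).

Lemma msum_morph (f : A -> A) : (forall x y, f (x + y) = f x + f y) ->
  forall k F, f (msum k F) = msum k (fun K => f (F K)).
Proof. move=> h k F; rewrite /msum; exact: addf_sum. Qed.

Lemma msumN k (F : multi n -> A) : msum k (fun K => - F K) = - msum k F.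
Proof. exact: sumrN. Qed.

Lemma msum_exchange k1 k2 (F : multi n -> multi n -> A) :
  msum k1 (fun K => msum k2 (fun J => F K J)) = msum k2 (fun J => msum k1 (fun K => F K J)).
Proof. exact: exchange_big. Qed.

Lemma sgn_unit (K : multi n) (i : 'I_n) : (-1) ^+ mord (madd K (munit i)) = - (-1) ^+ mord K :> A.
Proof. by rewrite mordD mord_unit addn1 exprS mulN1r. Qed.

Lemma frechet_add x y Q : frechet (x + y) Q = frechet x Q + frechet y Q.
Proof.
set m := maxn (ord x) (ord y).
have vx := van_max_l x y; have vy := van_max_r x y.
rewrite (frechet_box Q (van_add vx vy) (leqnn m)) (frechet_box Q vx (leqnn m)).
rewrite (frechet_box Q vy (leqnn m)) -msumD; apply: msum_ext => K.
by rewrite duD mulrDl.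
Qed.

Lemma frechet_msum Q k F : frechet (msum k F) Q = msum k (fun K => frechet (F K) Q).
Proof. exact: (@msum_morph (fun x => frechet x Q) (fun x y => frechet_add x y Q)). Qed.

Lemma frechet_m1X m x Q : frechet ((-1) ^+ m * x) Q = (-1) ^+ m * frechet x Q.
Proof.
have vx := van_ord x.
rewrite (frechet_box Q (van_mul (van_m1X _ m) vx) (leqnn _)) (frechet_box Q vx (leqnn _)).
rewrite msum_mulr; apply: msum_ext => K; by rewrite ja_duM du_m1X mul0r add0r mulrA.
Qed.

Lemma van_frechet m q a Q : van m a -> van q Q -> van (m + q) (frechet a Q).
Proof.
move=> va vQ; rewrite (frechet_box Q va (leqnn m)); apply: van_sum => B _.
case: (leqP (mord (mbox B)) m) => h; last by rewrite va // mul0r; exact: van0.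
apply: van_mul; first by apply: van_le (van_du _ va) _; exact: leq_addr.
by apply: van_le (van_Dm _ vQ) _; rewrite addnC leq_add2r.
Qed.

Lemma frechet_D i x Q : frechet (D i x) Q = D i (frechet x Q).
Proof.
have vx := van_ord x; set m := ord x; set k := m.+1.
rewrite (frechet_box Q (van_totD i vx) (leqnn k)) (frechet_box Q vx (leqnSn m)).
rewrite (msum_morph (totD_add i)).
rewrite (@msum_ext _ V k _ (fun K => D i (du K x) * Dm K Q +
     (if (0 < K i)%N then du (msub K i) x * Dm K Q else 0))); last first.
  by move=> K; rewrite du_totD mulrDl; case: ifP; rewrite ?mul0r.
rewrite (@msum_ext _ V k (fun K => D i (du K x * Dm K Q)) (fun K => D i (du K x) * Dm K Q +
     du (msub (madd K (munit i)) i) x * Dm (madd K (munit i)) Q)); last first.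
  by move=> K; rewrite totD_mul msub_madd Dm_add_unit.
rewrite !msumD; congr (_ + _).
rewrite (msum_shift (F := fun M => du (msub M i) x * Dm M Q)) // => M hM.
rewrite vx ?mul0r //; apply: leq_trans (mord_msub_ge M i).
by rewrite -ltnS prednK // (leq_trans _ hM).
Qed.

Lemma frechet_Dm (K : multi n) x Q : frechet (Dm K x) Q = Dm K (frechet x Q).
Proof. exact: (@Dm_morph _ _ (fun x => frechet x Q) (fun i x => frechet_D i x Q)). Qed.

Lemma du_frechet (K : multi n) a Q : du K (frechet a Q) =
  frechet (du K a) Q + msum (ord a) (fun J => du J a * du K (Dm J Q)).
Proof.
rewrite {1}/frechet.
change (du K (msum (ord a) (fun J => du J a * Dm J Q)) =
  frechet (du K a) Q + msum (ord a) (fun J => du J a * du K (Dm J Q))).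
rewrite (msum_morph (duD K)).
rewrite (frechet_box Q (van_du K (van_ord a)) (leqnn _)) -msumD.
by apply: msum_ext => J; rewrite ja_duM ja_dudu.
Qed.

Lemma adjf_box q k Q c : van q Q -> (q <= k)%N ->
  adjf Q c = msum k (fun K => (-1) ^+ mord K * Dm K (du K Q * c)).
Proof.
move=> vQ le; rewrite /adjf.
apply: (@msum_min _ V q (ord Q) k) => // K h.
  by rewrite vQ // mul0r Dm0 mulr0.
by rewrite ja_ordP // mul0r Dm0 mulr0.
Qed.

Lemma adjf_add Q x y : adjf Q (x + y) = adjf Q x + adjf Q y.
Proof. rewrite /adjf -msumD; apply: msum_ext => K; by rewrite mulrDr Dm_add mulrDr. Qed.
Lemma adjf0 Q : adjf Q 0 = 0. Proof. exact: (@addf0 _ _ (adjf Q) (adjf_add Q)). Qed.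
Lemma adjfN Q x : adjf Q (- x) = - adjf Q x. Proof. exact: (@addfN _ _ (adjf Q) (adjf_add Q)). Qed.
Lemma adjf_msum Q k F : adjf Q (msum k F) = msum k (fun K => adjf Q (F K)).
Proof. exact: (@msum_morph (adjf Q) (adjf_add Q)). Qed.

Lemma adjf_D i Q c : adjf (D i Q) c = - adjf Q (D i c).
Proof.
have vQ := van_ord Q; set q := ord Q; set k := q.+1.
rewrite (adjf_box c (van_totD i vQ) (leqnn k)) (adjf_box (D i c) vQ (leqnSn q)).
pose G M := (-1) ^+ mord M * Dm M (du (msub M i) Q * c).
rewrite (@msum_ext _ V k _ (fun K => - G (madd K (munit i)) - (-1) ^+ mord K * Dm K (du K Q * D i c)
     + (if (0 < K i)%N then G K else 0))); last first.
  move=> K; rewrite du_totD mulrDl.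
  have -> : D i (du K Q) * c = D i (du K Q * c) - du K Q * D i c by rewrite totD_mul; ring.
  rewrite /G sgn_unit msub_madd Dm_add_unit -Dm_D !Dm_add DmN.
  case: ifP => _; rewrite ?mul0r ?Dm0; ring.
rewrite !msumD -msum_shift; last first.
  move=> M hM; rewrite /G vQ ?mul0r ?Dm0 ?mulr0 //; apply: leq_trans (mord_msub_ge M i).
  by rewrite -ltnS prednK // (leq_trans _ hM).
by rewrite !msumN /k; ring.
Qed.

Lemma adjf_Dm (J : multi n) Q c : adjf (Dm J Q) c = adjf Q ((-1) ^+ mord J * Dm J c).
Proof.
have : forall d (J : multi n) c, mord J = d ->
    adjf (Dm J Q) c = adjf Q ((-1) ^+ d * Dm J c).
  elim=> [|d ih] J' c' e.
    by rewrite (mord_eq0 e) !Dm_zero expr0 mul1r.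
  have [i hi] := pos_entry e.
  have e' : mord (msub J' i) = d by rewrite mord_msub // e.
  rewrite -(madd_msub hi) !Dm_add_unit adjf_D (ih _ _ e') -adjfN -Dm_D.
  by rewrite exprS mulN1r mulNr.
by move=> /(_ _ J c erefl).
Qed.

Lemma euler_frechet a Q :
  euler (frechet a Q) = frechet (euler a) Q + adjf Q (euler a).
Proof.
have va := van_ord a; have vQ := van_ord Q.
set m := ord a; set q := ord Q; set k2 := (m + q)%N.
rewrite (euler_box (van_frechet va vQ) (leqnn k2)).
rewrite (@msum_ext _ V k2 _ (fun K => (-1) ^+ mord K * Dm K (frechet (du K a) Q) +
    msum m (fun J => (-1) ^+ mord K * Dm K (du K (Dm J Q) * du J a)))); last first.
  move=> K; rewrite du_frechet Dm_add mulrDr; congr (_ + _).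
  rewrite (msum_morph (Dm_add K)) msum_mulr; apply: msum_ext => J; by rewrite [du J a * _]mulrC.
rewrite msumD; congr (_ + _).
  rewrite (euler_box va (leq_addr q m)) frechet_msum; apply: msum_ext => K.
  by rewrite frechet_m1X frechet_Dm.
rewrite msum_exchange.
change (euler a) with (msum m (fun K => (-1) ^+ mord K * Dm K (du K a))).
rewrite adjf_msum; apply: msum_ext => J.
rewrite -adjf_Dm.
case: (leqP (mord J) m) => h.
  rewrite (@adjf_box _ k2 _ (du J a) (van_Dm J vQ)) // addnC leq_add2r //.
rewrite va // adjf0 /msum big1 // => B _.
by rewrite mulr0 Dm0 mulr0.
Qed.

End Frechet.
Arguments van_frechet {n V m q a Q}.

Set Implicit Arguments. Unset Strict Implicit. Unset Printing Implicit Defensive.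

Section Euler.
Variables (n : nat) (V : jet_algebra n).
Local Notation A := (ja_carrier V).
Local Notation u := (ja_u V).
Local Notation dx := (ja_dx V).
Local Notation du := (ja_du V).
Local Notation ord := (ja_ord V).
Local Notation D := (@totD _ V).
Local Notation Dm := (@totDm _ V).
Local Notation msum := (@msum n V).
Local Notation van := (@van n V).
Implicit Types (a b x y Q c : A) (K J M : multi n) (i : 'I_n).

Lemma euler_add x y : euler (x + y) = euler x + euler y.
Proof.
set m := maxn (ord x) (ord y).
have vx := van_max_l x y; have vy := van_max_r x y.
rewrite (euler_box (van_add vx vy) (leqnn m)) (euler_box vx (leqnn m)).
rewrite (euler_box vy (leqnn m)) -msumD; apply: msum_ext => K.
by rewrite duD Dm_add mulrDr.
Qed.

Lemma euler0 : euler (0 : A) = 0. Proof. exact: (@addf0 _ _ (@euler _ V) euler_add). Qed.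
Lemma eulerN x : euler (- x) = - euler x. Proof. exact: (@addfN _ _ (@euler _ V) euler_add). Qed.
Lemma euler_msum k F : euler (msum k F) = msum k (fun K => euler (F K)).
Proof. exact: (@msum_morph _ V (@euler _ V) euler_add). Qed.

Lemma euler_m1X m x : euler ((-1) ^+ m * x) = (-1) ^+ m * euler x.
Proof.
have vx := van_ord x.
rewrite (euler_box (van_mul (van_m1X _ m) vx) (leqnn _)) (euler_box vx (leqnn _)).
rewrite msum_mulr; apply: msum_ext => K.
by rewrite ja_duM du_m1X mul0r add0r Dm_m1X_mul mulrCA.
Qed.

Lemma euler_D i c : euler (D i c) = 0.
Proof.
have vc := van_ord c; set m := ord c; set k := m.+1.
rewrite (euler_box (van_totD i vc) (leqnn k)).
pose G M := (-1) ^+ mord M * Dm M (du (msub M i) c).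
rewrite (@msum_ext _ V k _ (fun K => - G (madd K (munit i)) + (if (0 < K i)%N then G K else 0)));
  last first.
  move=> K; rewrite du_totD Dm_add mulrDr /G sgn_unit msub_madd Dm_add_unit -Dm_D.
  by case: ifP => _; rewrite ?Dm0 ?mulr0 ?addr0 // mulNr opprK.
rewrite msumD -msum_shift ?msumN ?addNr //.
move=> M hM; rewrite /G vc ?Dm0 ?mulr0 //; apply: leq_trans (mord_msub_ge M i).
by rewrite -ltnS prednK // (leq_trans _ hM).
Qed.

Lemma euler_IBP J a b : euler (a * Dm J b) = euler ((-1) ^+ mord J * (b * Dm J a)).
Proof.
have : forall d J a b, mord J = d -> euler (a * Dm J b) = euler ((-1) ^+ d * (b * Dm J a)).
  elim=> [|d ih] J' a' b' e.
    by rewrite (mord_eq0 e) !Dm_zero expr0 mul1r mulrC.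
  have [i hi] := pos_entry e.
  have e' : mord (msub J' i) = d by rewrite mord_msub // e.
  rewrite -(madd_msub hi) !Dm_add_unit.
  have -> : a' * D i (Dm (msub J' i) b') =
            D i (a' * Dm (msub J' i) b') - D i a' * Dm (msub J' i) b'.
    by rewrite totD_mul; ring.
  rewrite euler_add eulerN euler_D add0r (ih _ _ _ e') -Dm_D -eulerN.
  by rewrite exprS mulN1r mulNr.
by move=> /(_ _ J a b erefl).
Qed.

Lemma euler_frechet_IBP a Q : euler (frechet a Q) = euler (Q * euler a).
Proof.
rewrite (frechet_box Q (van_ord a) (leqnn _)) euler_msum.
rewrite (@msum_ext _ V _ _ (fun J => euler ((-1) ^+ mord J * (Q * Dm J (du J a)))));
  last by move=> J; exact: euler_IBP.
rewrite -euler_msum; congr euler.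
change (euler a) with (msum (ord a) (fun K => (-1) ^+ mord K * Dm K (du K a))).
rewrite msum_mulr.
by apply: msum_ext => J; rewrite mulrCA.
Qed.

End Euler.

Lemma prolong_eq n (V : jet_algebra n) (P G : ja_carrier V) :
  prolong (xiP P) (etaP P) G =
  frechet G P - \sum_(i < n) ja_du V (munit i) P * totD i G.
Proof.
rewrite /prolong.
have -> : etaP P - \sum_(i < n) xiP P i * ja_u V (munit i) = P.
  rewrite /etaP /xiP.
  have e : \sum_(i < n) - ja_du V (munit i) P * ja_u V (munit i) =
           - \sum_(i < n) ja_u V (munit i) * ja_du V (munit i) P.
    by rewrite -sumrN; apply: eq_bigr => i _; rewrite mulNr mulrC.
  by rewrite e opprK subrK.
rewrite (eq_bigr (fun B => ja_du V (mbox B) G * totDm (mbox B) P +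
   \sum_(i < n) xiP P i * (ja_u V (madd (mbox B) (munit i)) * ja_du V (mbox B) G))); last first.
  move=> B _; rewrite mulrDl mulr_suml [totDm _ _ * _]mulrC; congr (_ + _).
  by apply: eq_bigr => i _; rewrite mulrA.
rewrite big_split /= exchange_big /=.
rewrite /frechet /totD /xiP.
under [X in _ + (_ + X)]eq_bigr do rewrite -mulr_sumr.
under eq_bigr do rewrite mulNr.
under [X in _ + (_ + X)]eq_bigr do rewrite mulNr.
under [X in _ - X]eq_bigr do rewrite mulrDr.
rewrite big_split /= !sumrN; ring.
Qed.

Unset Implicit Arguments. Set Strict Implicit.

Theorem corollary4p7 (n : nat) (V : jet_algebra n)
    (L G P f : ja_carrier V) :
  G = euler L ->
  (* P = P(x, u, u_1, ..., u_n) *)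
  (forall K : multi n, (1 < mord K)%N -> ja_du V K P = 0) ->
  (* pr X_P (G) = f G *)
  prolong (xiP P) (etaP P) G = f * G ->
  (* the symmetry is not variational *)
  euler (P * G) != 0 ->
  let W := f + ja_du V (mzero n) P
             - \sum_(i < n) totD i (ja_du V (munit i) P) in
  (forall a : ja_carrier V, Sop P f a = W * a) /\ var_int_factor W G.
Proof.
move=> hG hP hsym hE W.
have vP : van 1 P by [].
have fr1 : forall a, frechet P a =
    ja_du V (mzero n) P * a + \sum_(i < n) ja_du V (munit i) P * totD i a.
  move=> a; rewrite (frechet_box a vP (leqnn 1)) msum_first; last first.
    by move=> K hK; rewrite hP // mul0r.
  rewrite Dm_zero; congr (_ + _); apply: eq_bigr => i _; by rewrite Dm_unit.
have adj1 : forall c, adjf P c =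
    ja_du V (mzero n) P * c - \sum_(i < n) totD i (ja_du V (munit i) P * c).
  move=> c; rewrite (adjf_box c vP (leqnn 1)) msum_first; last first.
    by move=> K hK; rewrite hP // mul0r Dm0 mulr0.
  rewrite mord0 expr0 mul1r Dm_zero -sumrN; congr (_ + _); apply: eq_bigr => i _.
  by rewrite mord_unit expr1 mulN1r Dm_unit.
have pe := prolong_eq P G; rewrite hsym in pe.
have key : W * G = euler (P * G).
  have e1 := euler_frechet_IBP L P; rewrite -hG in e1.
  have e2 := euler_frechet L P; rewrite -hG in e2.
  rewrite -e1 e2 adj1.
  have -> : frechet G P = f * G + \sum_(i < n) ja_du V (munit i) P * totD i G.
    by rewrite pe subrK.
  under [X in _ = _ + (_ - X)]eq_bigr do rewrite totD_mul.
  rewrite big_split /= /W !mulrDl mulNr mulr_suml; ring.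
split.
  move=> a; rewrite /Sop fr1.
  change (adjointop 1 (RPcoef P f) a) with
    (msum 1 (fun K => (-1) ^+ mord K * totDm K (RPcoef P f K * a))).
  rewrite msum_first; last first.
    move=> K hK; rewrite /RPcoef.
    have -> : (K == mzero n) = false.
      by apply/negP => /eqP e; move: hK; rewrite e mord0.
    rewrite big1 /= ?mul0r ?subr0 ?mul0r ?Dm0 ?mulr0 // => i _.
    have -> : (K == munit i) = false.
      by apply/negP => /eqP e; move: hK; rewrite e mord_unit.
    by rewrite mul0r.
  rewrite mord0 expr0 mul1r Dm_zero.
  have r0 : RPcoef P f (mzero n) = f.
    rewrite /RPcoef eqxx mul1r big1 ?subr0 // => i _.
    by rewrite eq_sym munit_neq0 mul0r.
  have ri : forall i, RPcoef P f (munit i) = ja_du V (munit i) P.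
    move=> i; rewrite /RPcoef munit_neq0 mul0r sub0r (bigD1 i) //= eqxx mul1r.
    rewrite big1 ?addr0 /xiP ?opprK // => j hj.
    by rewrite munit_eq eq_sym (negbTE hj) mul0r.
  rewrite r0.
  under eq_bigr do rewrite mord_unit expr1 mulN1r Dm_unit ri totD_mul.
  rewrite /W !mulrDl mulNr mulr_suml sumrN big_split /=; ring.
split.
  apply/negP => /eqP W0; move: hE; by rewrite -key W0 mul0r eqxx.
by exists (P * G).
Qed.
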